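(* Assume $M$ has genus zero, let $a\in(0,1)$, $b=1-a$, and $p=\frac{q'}{q'+a^{-1}-1}$. Let $\omega\subseteq\mathsf E$ be distributed according to the $\mathrm{FK}(qq')$ random cluster model on $\mathsf G$ with parameter $p$ and free boundary conditions, i.e. $\propto (qq')^{k(\omega)}p^{|\omega|}(1-p)^{|\mathsf E\setminus\omega|}$. Independently assign to each cluster of $\omega$ a spin chosen uniformly from $Q$, and to each cluster of $\omega^\dagger$ (in $\mathsf G^*$) a spin chosen uniformly from $Q'$, all independently, and let $\sigma:\mathsf V\to Q$, $\sigma':\mathsf U\to Q'$ be the resulting spin configurations. Then $(\sigma,\sigma')$ has law $\mathbf P(\sigma,\sigma')\propto a^{|\eta(\sigma')|}b^{|\eta(\sigma)|}$ on $\Sigma$.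
   Context: $M$ is the sphere or the plane. Let $\mathsf G=(\mathsf V,\mathsf E)$ be a finite connected graph embedded in $M$ with all faces topological discs, and $\mathsf G^*=(\mathsf U,\mathsf E^* )$ its embedded dual ($\mathsf U$ = faces of $\mathsf G$); $e^*$ is the dual edge crossing $e$, $\xi^*=\{e^*:e\in\xi\}$, and for $\xi\subseteq\mathsf E$, $\xi^\dagger=\mathsf E^*\setminus\xi^*$. Fix integers $q,q'\ge1$ and finite $Q,Q'\subset\mathbb C$ with $Q=-Q$, $Q'=-Q'$, $|Q|=q$, $|Q'|=q'$. For $\sigma:\mathsf V\to Q$, $\eta(\sigma)\subseteq\mathsf E^*$ is the set of $e^*$ whose primal $e$ has endpoints with different $\sigma$-values; for $\sigma':\mathsf U\to Q'$, $\eta(\sigma')\subseteq\mathsf E$ is the set of $e$ whose dual $e^*$ has endpoints with different $\sigma'$-values. $\Sigma=\{(\sigma,\sigma'):\eta(\sigma)^*\cap\eta(\sigma')=\emptyset\}$. A cluster of $\omega$ is a connected component of $(\mathsf V,\omega)$ (isolated vertices included), $k(\omega)$ their number; clusters of $\omega^\dagger$ are connected components of $(\mathsf U,\omega^\dagger)$. *)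

(* Defs.v *)
(* Embedded graph of genus zero encoded as a combinatorial map. *)
From mathcomp Require Import all_boot all_order all_algebra all_fingroup.
From mathcomp Require Export reals.
Set Implicit Arguments. Unset Strict Implicit. Unset Printing Implicit Defensive.
Import GRing.Theory Num.Theory.
Local Open Scope ring_scope.

Section PlanarMap.
(* D : darts (half-edges), V : vertices, E : edges, U : faces.
   alpha : fixed-point free involution pairing the two darts of an edge,
   sigma : rotation of darts around their vertex,
   phimap := sigma o alpha : face permutation.
   vert d / edge d / face d : vertex / edge / face to which dart d belongs.
   The edge e = edge d has endpoints vert d, vert (alpha d); its dual edge e*
   joins face d and face (alpha d). *)
Variables (D V E U : finType) (alpha sigma : {perm D})
  (vert : D -> V) (edge : D -> E) (face : D -> U).

Definition phimap : {perm D} := (alpha * sigma)%g. (* d |-> sigma (alpha d) *)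

Definition genus0_map : Prop :=
  (forall d, alpha d != d) /\
  (forall d, alpha (alpha d) = d) /\
  (forall d d', (vert d == vert d') = fconnect sigma d d') /\
  (forall d d', (edge d == edge d') = fconnect alpha d d') /\
  (forall d d', (face d == face d') = fconnect phimap d d') /\
  (forall x : V, exists d, vert d = x) /\
  (forall e : E, exists d, edge d = e) /\
  (forall u : U, exists d, face d = u) /\
  (forall d d', connect [rel x y | (y == sigma x) || (y == alpha x)] d d') /\
  (#|V| + #|U| = #|E| + 2)%N.

Definition prim_rel (w : {set E}) : rel V :=
  fun x y => [exists d, [&& edge d \in w, vert d == x & vert (alpha d) == y]].
(* adjacency in (U, w^dagger): dual edges of the primal edges not in w *)
Definition dual_rel (w : {set E}) : rel U :=
  fun u v => [exists d, [&& edge d \notin w, face d == u & face (alpha d) == v]].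

(* number of connected components (= clusters, isolated points included) *)
Definition ncomp (T : finType) (r : rel T) : nat :=
  #|[set [set y | connect r x y] | x : T]|.

Definition kprim (w : {set E}) : nat := ncomp (prim_rel w).
Definition kdual (w : {set E}) : nat := ncomp (dual_rel w).

Variables (Q Q' : finType).

(* eta(sigma), identified via e* <-> e with a set of primal edges *)
Definition eta_prim (s : {ffun V -> Q}) : {set E} :=
  [set e | [exists d, (edge d == e) && (s (vert d) != s (vert (alpha d)))]].
(* eta(sigma') : primal edges whose dual edge has endpoints of different spin *)
Definition eta_dual (s' : {ffun U -> Q'}) : {set E} :=
  [set e | [exists d, (edge d == e) && (s' (face d) != s' (face (alpha d)))]].

Definition in_Sigma (s : {ffun V -> Q}) (s' : {ffun U -> Q'}) : bool :=
  [disjoint eta_prim s & eta_dual s'].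

Definition const_on_prim (w : {set E}) (s : {ffun V -> Q}) : bool :=
  [forall x, [forall y, connect (prim_rel w) x y ==> (s x == s y)]].
Definition const_on_dual (w : {set E}) (s' : {ffun U -> Q'}) : bool :=
  [forall u, [forall v, connect (dual_rel w) u v ==> (s' u == s' v)]].

Variable R : realType.

Definition fk_weight (qq : R) (p : R) (w : {set E}) : R :=
  qq ^+ kprim w * p ^+ #|w| * (1 - p) ^+ #|~: w|.

Definition fk_prob (qq p : R) (w : {set E}) : R :=
  fk_weight qq p w / \sum_(w' : {set E}) fk_weight qq p w'.

(* Law of (sigma, sigma') produced by: sample w ~ FK(qq'), then give each
   cluster of w an independent uniform spin in Q and each cluster of w^dagger
   an independent uniform spin in Q'. Given w, a configuration s has
   probability (1/|Q|)^{k(w)} if it is constant on clusters of w, else 0. *)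
Definition coupled_law (p : R) (s : {ffun V -> Q}) (s' : {ffun U -> Q'}) : R :=
  \sum_(w : {set E})
     fk_prob (#|Q| * #|Q'|)%:R p w
     * (if const_on_prim w s then (#|Q|%:R)^-1 ^+ kprim w else 0)
     * (if const_on_dual w s' then (#|Q'|%:R)^-1 ^+ kdual w else 0).

Definition spin_weight (a b : R) (s : {ffun V -> Q}) (s' : {ffun U -> Q'}) : R :=
  if in_Sigma s s' then a ^+ #|eta_dual s'| * b ^+ #|eta_prim s| else 0.

Definition spin_law (a b : R) (s : {ffun V -> Q}) (s' : {ffun U -> Q'}) : R :=
  spin_weight a b s s' /
  \sum_(t : {ffun V -> Q}) \sum_(t' : {ffun U -> Q'}) spin_weight a b t t'.

End PlanarMap.

(* Main.v *)
Require Import Defs.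
From mathcomp Require Import all_boot all_order all_algebra all_fingroup reals.
From mathcomp Require Import zify ring.
Import GRing.Theory Num.Theory.
Set Implicit Arguments. Unset Strict Implicit. Unset Printing Implicit Defensive.

Section Generic.
Variable T : finType.

Definition cls (r : rel T) x := [set y | connect r x y].

Lemma cls_eq (r : rel T) : connect_sym r -> forall x y, connect r x y -> cls r x = cls r y.
Proof.
move=> sym x y xy; apply/setP=> z; rewrite !inE; apply/idP/idP => H.
  by rewrite sym in xy; exact: connect_trans xy H.
exact: connect_trans xy H.
Qed.

Lemma const_connect (A : Type) (r : rel T) (f : T -> A) :
  (forall x y, r x y -> f x = f y) -> forall x y, connect r x y -> f x = f y.
Proof.
move=> H x y /connectP [p pth ->]; elim: p x pth => //= z p IH x /andP [rxz pth].
by rewrite (H _ _ rxz); exact: IH.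
Qed.

Lemma connect_map (T2 : finType) (e1 : rel T) (e2 : rel T2) (f : T -> T2) :
  (forall x y, e1 x y -> connect e2 (f x) (f y)) ->
  forall x y, connect e1 x y -> connect e2 (f x) (f y).
Proof.
move=> H x y /connectP [p pth ->]; elim: p x pth => [x _|z p IH x /andP [rxz pth]].
  exact: connect0.
exact: connect_trans (H _ _ rxz) (IH _ pth).
Qed.

Lemma ncomp_le_all (r : rel T) : (forall x y, connect r x y) -> (ncomp r <= 1)%N.
Proof.
move=> H; rewrite /ncomp; apply: leq_trans (_ : #|[set [set: T]]| <= 1)%N; last by rewrite cards1.
apply: subset_leq_card; apply/subsetP => C /imsetP [x _ ->]; rewrite inE.
by apply/eqP/setP => y; rewrite !inE H.
Qed.

Lemma ncomp_empty (r : rel T) : (forall x y, ~~ r x y) -> ncomp r = #|T|.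
Proof.
move=> H; rewrite /ncomp (@eq_imset _ _ _ (fun x => [set x])); last first.
move=> x; apply/setP => y; rewrite !inE; apply/idP/eqP => [/connectP [[|z p] /= pth ->] //|->].
  by move: pth; rewrite (negbTE (H _ _)).
  exact: connect0.
by rewrite card_imset //; exact: set1_inj.
Qed.

Lemma ncomp_eq (r r' : rel T) : connect r =2 connect r' -> ncomp r = ncomp r'.
Proof.
move=> H; rewrite /ncomp.
suff -> : [set [set y | connect r x y] | x : T] = [set [set y | connect r' x y] | x : T] by [].
apply: eq_imset => x.
by apply/setP => y; rewrite !inE H.
Qed.

Section Merge.
Variables (r r' : rel T) (x y : T).
Hypothesis symr : symmetric r.
Hypothesis H2 : forall u v, r' u v -> [|| r u v, (u == x) && (v == y) | (u == y) && (v == x)].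

Let B z := connect r z x || connect r z y.

Lemma merge_connect u v : connect r' u v -> connect r u v \/ (B u /\ B v).
Proof.
have csym := sym_connect_sym symr.
have step z t : connect r u z \/ (B u /\ B z) -> r' z t -> connect r u t \/ (B u /\ B t).
  move=> Hz rzt; move: Hz; case/or3P: (H2 rzt) => [rzt'|/andP [/eqP -> /eqP ->]|/andP [/eqP -> /eqP ->]] Hz.
  - case: Hz => [uz|[Bu Bz]]; first by left; exact: connect_trans uz (connect1 rzt').
    right; split=> //; have tz : connect r t z by rewrite csym connect1.
    by case/orP: Bz => h; rewrite /B (connect_trans tz h) ?orbT.
  - right; case: Hz => [ux|[Bu _]]; split => //; rewrite /B ?ux ?connect0 ?orbT //.
  - right; case: Hz => [ux|[Bu _]]; split => //; rewrite /B ?ux ?connect0 ?orbT //.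
move/connectP => [p pth ->].
suff gen : forall p z, path r' z p -> (connect r u z \/ (B u /\ B z)) ->
    (connect r u (last z p) \/ (B u /\ B (last z p))).
  exact: (gen p u pth (or_introl (connect0 r u))).
elim=> [|t p' IH] z //= /andP [rzt pth'] Hz; apply: IH pth' _; exact: step Hz rzt.
Qed.

Lemma merge_le : (ncomp r <= (ncomp r').+1)%N.
Proof.
have csym := sym_connect_sym symr.
set K := [set cls r z | z : T]; set K' := [set cls r' z | z : T].
pose h (C : {set T}) := cls r' (odflt x [pick t in C]).
have hK C : C \in K -> exists2 t, C = cls r t & h C = cls r' t.
  case/imsetP => z _ ->; rewrite /h; case: pickP => [t /= ht|/(_ z)]; last by rewrite inE connect0.
  by exists t => //; apply: cls_eq => //; rewrite inE in ht.
have -> : ncomp r = #|K| by [].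
have -> : ncomp r' = #|K'| by [].
rewrite (cardsD1 (cls r y) K).
suff HH : (#|K :\ cls r y| <= #|K'|)%N by case: (_ \in K); rewrite /= ?add0n ?add1n ?ltnS // (leq_trans HH).
rewrite -(card_in_imset (f := h)); last first.
  move=> C1 C2 /setD1P [ne1 K1] /setD1P [ne2 K2].
  have [t1 e1 h1] := hK _ K1; have [t2 e2 h2] := hK _ K2.
  rewrite h1 h2 => E12.
  have : connect r' t1 t2.
    have : t2 \in cls r' t2 by rewrite inE connect0.
    by rewrite -E12 inE.
  case/merge_connect => [c12|[]]; first by rewrite e1 e2; exact: cls_eq.
  rewrite /B; case/orP => [t1x|t1y]; last by rewrite e1 (cls_eq csym t1y) eqxx in ne1.
  case/orP => [t2x|t2y]; last by rewrite e2 (cls_eq csym t2y) eqxx in ne2.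
  by rewrite e1 e2 (cls_eq csym t1x) (cls_eq csym t2x).
apply: subset_leq_card; apply/subsetP => C' /imsetP [C /setD1P [_ HC] ->].
have [t _ ->] := hK _ HC; exact: imset_f.
Qed.

Hypothesis H1 : forall u v, r u v -> r' u v.

Lemma merge_eq : connect r x y -> ncomp r = ncomp r'.
Proof.
move=> xy; apply: ncomp_eq => u v; apply/idP/idP.
  by apply: connect_sub => u' v' /H1 /connect1.
apply: connect_sub => u' v' /H2 /or3P [/connect1 //|/andP [/eqP -> /eqP ->] //|].
by case/andP => /eqP -> /eqP ->; rewrite (sym_connect_sym symr).
Qed.
End Merge.

Lemma count_const (Q : finType) (q0 : Q) (r : rel T) : connect_sym r ->
  #|[set s : {ffun T -> Q} | [forall x, [forall y, connect r x y ==> (s x == s y)]]]|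
  = (#|Q| ^ ncomp r)%N.
Proof.
move=> csym.
set K := [set cls r z | z : T].
have Kx z : cls r z \in K by apply: imset_f.
pose S := {C : {set T} | C \in K}.
pose F (g : {ffun S -> Q}) : {ffun T -> Q} := [ffun z => g (exist _ (cls r z) (Kx z))].
have -> : [set s : {ffun T -> Q} | [forall x, [forall y, connect r x y ==> (s x == s y)]]]
    = [set F g | g in setT].
  apply/setP => s; rewrite inE; apply/idP/imsetP => [H|[g _ ->]].
    pose g : {ffun S -> Q} := [ffun C : S => if [pick t in proj1_sig C] is Some t then s t else q0].
    exists g => //; apply/ffunP => z; rewrite !ffunE /=.
    case: pickP => [t /=|/(_ z)]; last by rewrite inE connect0.
    by rewrite inE => zt; move/forallP: H => /(_ z) /forallP /(_ t) /implyP /(_ zt) /eqP.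
  apply/forallP => u; apply/forallP => v; apply/implyP => uv; rewrite !ffunE.
  suff -> : exist _ (cls r u) (Kx u) = exist _ (cls r v) (Kx v) :> S by [].
  by apply: val_inj; rewrite /= (cls_eq csym uv).
rewrite card_in_imset; last first.
  move=> g1 g2 _ _ Hg; apply/ffunP => [[C HC]].
  have [z _ Cz] := imsetP HC; have := congr1 (fun f : {ffun T -> Q} => f z) Hg; rewrite /F !ffunE.
  suff -> : exist _ C HC = exist _ (cls r z) (Kx z) :> S by [].
  exact: val_inj.
by rewrite cardsT card_ffun card_sig.
Qed.

End Generic.

Section Map.
Variables (D V E U : finType) (alpha sigma : {perm D})
  (vert : D -> V) (edge : D -> E) (face : D -> U).
Hypothesis hmap : genus0_map alpha sigma vert edge face.

Local Notation prim := (prim_rel alpha vert edge).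
Local Notation dual := (dual_rel alpha edge face).
Local Notation kp := (kprim alpha vert edge).
Local Notation kd := (kdual alpha edge face).

Lemma alpha_inv d : alpha (alpha d) = d.
Proof. by case: hmap => _ [h _]. Qed.
Lemma vert_eq d d' : (vert d == vert d') = fconnect sigma d d'.
Proof. by case: hmap => _ [_ [h _]]. Qed.
Lemma edge_eq d d' : (edge d == edge d') = fconnect alpha d d'.
Proof. by case: hmap => _ [_ [_ [h _]]]. Qed.
Lemma face_eq d d' : (face d == face d') = fconnect (phimap alpha sigma) d d'.
Proof. by case: hmap => _ [_ [_ [_ [h _]]]]. Qed.
Lemma vert_surj x : exists d, vert d = x.
Proof. by case: hmap => _ [_ [_ [_ [_ [h _]]]]]. Qed.
Lemma edge_surj x : exists d, edge d = x.
Proof. by case: hmap => _ [_ [_ [_ [_ [_ [h _]]]]]]. Qed.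
Lemma face_surj x : exists d, face d = x.
Proof. by case: hmap => _ [_ [_ [_ [_ [_ [_ [h _]]]]]]]. Qed.
Lemma hconn d d' : connect [rel x y | (y == sigma x) || (y == alpha x)] d d'.
Proof. by case: hmap => _ [_ [_ [_ [_ [_ [_ [_ [h _]]]]]]]]. Qed.
Lemma hcount : (#|V| + #|U| = #|E| + 2)%N.
Proof. by case: hmap => _ [_ [_ [_ [_ [_ [_ [_ [_ h]]]]]]]]. Qed.

Lemma vert_sigma d : vert (sigma d) = vert d.
Proof. by apply/eqP; rewrite eq_sym vert_eq fconnect1. Qed.
Lemma edge_alpha d : edge (alpha d) = edge d.
Proof. by apply/eqP; rewrite eq_sym edge_eq fconnect1. Qed.
Lemma face_phi d : face (sigma (alpha d)) = face d.
Proof.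
apply/eqP; rewrite eq_sym face_eq.
have -> : sigma (alpha d) = phimap alpha sigma d by rewrite /phimap permM.
exact: fconnect1.
Qed.
Lemma face_sigma d : face (sigma d) = face (alpha d).
Proof. by rewrite -{1}(alpha_inv d) face_phi. Qed.

Lemma edge_same d d' : edge d' = edge d -> d' = d \/ d' = alpha d.
Proof.
move=> h; have : fconnect alpha d d' by rewrite -edge_eq h eqxx.
move/iter_findex <-; elim: (findex _ _ _) => [|n IH]; first by left.
rewrite iterS; case: IH => ->; first by right.
by left; rewrite alpha_inv.
Qed.

Lemma prim_sym (w : {set E}) : symmetric (prim w).
Proof.
move=> x y; apply/idP/idP => /existsP [d /and3P [h1 /eqP h2 /eqP h3]];
  apply/existsP; exists (alpha d); by rewrite edge_alpha alpha_inv h1 h2 h3 !eqxx.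
Qed.
Lemma dual_sym (w : {set E}) : symmetric (dual w).
Proof.
move=> x y; apply/idP/idP => /existsP [d /and3P [h1 /eqP h2 /eqP h3]];
  apply/existsP; exists (alpha d); by rewrite edge_alpha alpha_inv h1 h2 h3 !eqxx.
Qed.

Lemma key (w : {set E}) d : edge d \notin w -> ~~ connect (prim w) (vert d) (vert (alpha d)) ->
  connect (dual (edge d |: w)) (face d) (face (alpha d)).
Proof.
move=> dw nc.
pose tau z := sigma (if edge z \in w then alpha z else z).
have tau_inj : injective tau.
  move=> z1 z2 /perm_inj; case: ifP => h1; case: ifP => h2.
  - exact: perm_inj.
  - by move=> e; rewrite -e edge_alpha h1 in h2.
  - by move=> e; rewrite e edge_alpha h2 in h1.
  - done.
pose C z := connect (prim w) (vert d) (vert z).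
have tauC z : C z -> C (tau z).
  rewrite /C /tau vert_sigma; case: ifP => // h Cz; apply: connect_trans Cz (connect1 _).
  by apply/existsP; exists z; rewrite h !eqxx.
have step z : C z -> z != d -> connect (dual (edge d |: w)) (face z) (face (tau z)).
  rewrite /tau; case: ifP => h Cz nzd; first by rewrite face_phi connect0.
  rewrite face_sigma; apply: connect1; apply/existsP; exists z.
  rewrite !eqxx !andbT in_setU1 h orbF.
  apply/eqP => ez; case: (edge_same ez) => ez'; first by rewrite ez' eqxx in nzd.
  by rewrite ez' /C in Cz; rewrite Cz in nc.
have fc : fconnect tau (tau d) d by rewrite fconnect_sym // fconnect1.
have exn : exists n, iter n tau (tau d) == d.
  by exists (findex tau (tau d) d); rewrite iter_findex.
case: (ex_minnP exn) => n /eqP itn minn.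
have inv i : (i <= n)%N -> C (iter i tau (tau d)) /\
    connect (dual (edge d |: w)) (face (tau d)) (face (iter i tau (tau d))).
  elim: i => [|i IH] lein; first by split; [apply: tauC; exact: connect0 | exact: connect0].
  have [Ci ci] := IH (ltnW lein); rewrite iterS; split; first exact: tauC.
  apply: connect_trans ci (step _ Ci _); apply/negP => /minn; by rewrite leqNgt lein.
have [_ cn] := inv n (leqnn n); rewrite itn in cn.
move: cn; rewrite /tau (negbTE dw) face_sigma.
by rewrite (sym_connect_sym (dual_sym _)).
Qed.

Lemma phi_step (w : {set E}) e : e \notin w -> (kd (e |: w) + kp w <= kd w + kp (e |: w) + 1)%N.
Proof.
move=> ew; have [d ed] := edge_surj e; rewrite -ed in ew *.
have Hp u v : prim (edge d |: w) u v -> [|| prim w u v, (u == vert d) && (v == vert (alpha d))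
     | (u == vert (alpha d)) && (v == vert d)].
  move=> /existsP [d' /and3P [h /eqP <- /eqP <-]]; rewrite in_setU1 in h.
  case/orP: h => [/eqP h|h].
    by case: (edge_same h) => ->; rewrite ?alpha_inv !eqxx ?orbT.
  by apply/orP; left; apply/existsP; exists d'; rewrite h !eqxx.
have Hd u v : dual w u v -> [|| dual (edge d |: w) u v, (u == face d) && (v == face (alpha d))
     | (u == face (alpha d)) && (v == face d)].
  move=> /existsP [d' /and3P [h /eqP <- /eqP <-]].
  case: (boolP (edge d' == edge d)) => [/eqP h'|h'].
    by case: (edge_same h') => ->; rewrite ?alpha_inv !eqxx ?orbT.
  by apply/orP; left; apply/existsP; exists d'; rewrite in_setU1 negb_or h h' !eqxx.
have Hp1 u v : prim w u v -> prim (edge d |: w) u v.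
  by move=> /existsP [d' /and3P [h h2 h3]]; apply/existsP; exists d'; rewrite in_setU1 h h2 h3 orbT.
have Hd1 u v : dual (edge d |: w) u v -> dual w u v.
  move=> /existsP [d' /and3P [h h2 h3]]; apply/existsP; exists d'.
  by rewrite in_setU1 negb_or in h; case/andP: h => _ h; rewrite h h2 h3.
have lep := merge_le (prim_sym w) Hp.
have led := merge_le (dual_sym _) Hd.
rewrite /kprim /kdual.
case: (boolP (connect (prim w) (vert d) (vert (alpha d)))) => c.
  have := merge_eq (prim_sym w) Hp Hp1 c; lia.
have := merge_eq (dual_sym _) Hd Hd1 (key ew c); lia.
Qed.

Lemma euler (w : {set E}) : (kd w + kp set0 = kd set0 + kp w + #|w|)%N.
Proof.
have up n : forall w' : {set E}, #|~: w'| = n -> (kd setT + kp w' <= kd w' + kp setT + #|~: w'|)%N.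
  elim: n => [|n IH] w' hn.
    have := cards0_eq hn => /(congr1 (@setC _)); rewrite setCK setC0 => ->; lia.
  have : (0 < #|~: w'|)%N by rewrite hn.
  case/card_gt0P => e; rewrite inE => ew.
  have hc : #|~: (e |: w')| = n.
    have -> : ~: (e |: w') = ~: w' :\ e by apply/setP => z; rewrite !inE negb_or.
    by move: hn; rewrite (cardsD1 e (~: w')) inE ew add1n => -[].
  have := IH _ hc; have := phi_step ew; lia.
have down n : forall w' : {set E}, #|w'| = n -> (kd w' + kp set0 <= kd set0 + kp w' + #|w'|)%N.
  elim: n => [|n IH] w' hn.
    by rewrite (cards0_eq hn); lia.
  have : (0 < #|w'|)%N by rewrite hn.
  case/card_gt0P => e ew.
  have hc : #|w' :\ e| = n by move: hn; rewrite (cardsD1 e w') ew add1n => -[].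
  have ew0 : e \notin w' :\ e by rewrite !inE eqxx.
  have := IH _ hc; have := phi_step ew0; rewrite setD1K //.
  move: hn; rewrite (cardsD1 e w') ew add1n; lia.
have c1 : (kd set0 <= 1)%N.
  apply: ncomp_le_all => x y.
  have [dx <-] := face_surj x; have [dy <-] := face_surj y.
  apply: (connect_map _ (hconn dx dy)) => z t /orP [/eqP ->|/eqP ->].
    by rewrite face_sigma; apply: connect1; apply/existsP; exists z; rewrite inE !eqxx.
  by apply: connect1; apply/existsP; exists z; rewrite inE !eqxx.
have c2 : (kp setT <= 1)%N.
  apply: ncomp_le_all => x y.
  have [dx <-] := vert_surj x; have [dy <-] := vert_surj y.
  apply: (connect_map _ (hconn dx dy)) => z t /orP [/eqP ->|/eqP ->].
    by rewrite vert_sigma connect0.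
  by apply: connect1; apply/existsP; exists z; rewrite inE !eqxx.
have c3 : kd setT = #|U|.
  by apply: ncomp_empty => x y; apply/existsP => -[z]; rewrite inE.
have c4 : kp set0 = #|V|.
  by apply: ncomp_empty => x y; apply/existsP => -[z]; rewrite inE.
have := up _ w erefl; have := down _ w erefl; have := cardsC w; have := hcount.
lia.
Qed.

End Map.
Local Open Scope ring_scope.

Lemma disjointI (T : finType) (A B : {pred T}) :
  (forall x, x \in A -> x \in B -> False) -> [disjoint A & B].
Proof.
move=> H; rewrite disjoint_subset; apply/subsetP => x xA; rewrite inE; apply/negP => xB.
exact: H xA xB.
Qed.

Section Const.
Variables (D V E U : finType) (alpha : {perm D})
  (vert : D -> V) (edge : D -> E) (face : D -> U) (Q Q' : finType).

Lemma const_prim (w : {set E}) (s : {ffun V -> Q}) :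
  const_on_prim alpha vert edge w s = [disjoint w & eta_prim alpha vert edge s].
Proof.
apply/idP/idP => H.
  apply: disjointI => e ew; rewrite inE => /existsP [d /andP [/eqP ed neq]].
  move/forallP: H => /(_ (vert d)) /forallP /(_ (vert (alpha d))) /implyP H.
  have : connect (prim_rel alpha vert edge w) (vert d) (vert (alpha d)).
    by apply: connect1; apply/existsP; exists d; rewrite ed ew !eqxx.
  by move/H; rewrite (negbTE neq).
apply/forallP => x; apply/forallP => y; apply/implyP => cxy; apply/eqP.
apply: (const_connect (f := fun z => s z)) cxy => u v /existsP [d /and3P [dw /eqP <- /eqP <-]].
have := disjointFr H dw; rewrite inE => /negbT; rewrite negb_exists => /forallP /(_ d).
by rewrite eqxx /= negbK => /eqP.
Qed.

Lemma const_dual (w : {set E}) (s : {ffun U -> Q'}) :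
  const_on_dual alpha edge face w s = [disjoint ~: w & eta_dual alpha edge face s].
Proof.
apply/idP/idP => H.
  apply: disjointI => e; rewrite inE => ew; rewrite inE => /existsP [d /andP [/eqP ed neq]].
  move/forallP: H => /(_ (face d)) /forallP /(_ (face (alpha d))) /implyP H.
  have : connect (dual_rel alpha edge face w) (face d) (face (alpha d)).
    by apply: connect1; apply/existsP; exists d; rewrite ed ew !eqxx.
  by move/H; rewrite (negbTE neq).
apply/forallP => x; apply/forallP => y; apply/implyP => cxy; apply/eqP.
apply: (const_connect (f := fun z => s z)) cxy => u v /existsP [d /and3P [dw /eqP <- /eqP <-]].
have dw' : edge d \in ~: w by rewrite inE.
have := disjointFr H dw'; rewrite inE => /negbT; rewrite negb_exists => /forallP /(_ d).
by rewrite eqxx /= negbK => /eqP.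
Qed.
End Const.

Lemma sum_sets (T : finType) (R : comPzRingType) (g : T -> bool -> R) :
  \sum_(w : {set T}) \prod_e g e (e \in w) = \prod_e (g e true + g e false).
Proof.
have -> : \prod_e (g e true + g e false) = \prod_e \sum_(b : bool) g e b.
  by apply: eq_bigr => e _; rewrite big_bool.
rewrite bigA_distr_bigA (reindex (fun f : {ffun T -> bool} => [set e | f e])) /=.
  by apply: eq_bigr => f _; apply: eq_bigr => e _; rewrite inE.
exists (fun w : {set T} => [ffun e => e \in w]) => [f _|w _].
  by apply/ffunP => e; rewrite ffunE inE.
by apply/setP => e; rewrite inE ffunE.
Qed.

Lemma prod_ind (T : finType) (R : comPzRingType) (A P : {set T}) (x : R) :
  \prod_(e in A) (if e \in P then 0 else x) = if [disjoint A & P] then x ^+ #|A| else 0.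
Proof.
case: ifP => H.
  by rewrite -prodr_const; apply: eq_bigr => e eA; rewrite (disjointFr H eA).
have [e /andP [eA eP]] : exists e, (e \in A) && (e \in P).
  apply/existsP; move/negbT: H; apply: contraNT; rewrite negb_exists => /forallP Hn.
  by apply: disjointI => e eA eP; move: (Hn e); rewrite eA eP.
by rewrite (bigD1 e) //= eP mul0r.
Qed.

Theorem corollary2p3
  (D V E U : finType) (alpha sigma : {perm D})
  (vert : D -> V) (edge : D -> E) (face : D -> U)
  (hmap : genus0_map alpha sigma vert edge face)
  (q q' : nat) (hq : (1 <= q)%N) (hq' : (1 <= q')%N)
  (Q Q' : finType) (hQ : #|Q| = q) (hQ' : #|Q'| = q')
  (R : realType) (a : R) (ha0 : 0 < a) (ha1 : a < 1) :
  let b := 1 - a in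
  let p := q'%:R / (q'%:R + a^-1 - 1) in
  forall (s : {ffun V -> Q}) (s' : {ffun U -> Q'}),
    coupled_law alpha vert edge face p s s' = spin_law alpha vert edge face a b s s'.
Proof.
move=> b p s s'.
have a0 : a != 0 by exact: lt0r_neq0.
have b0 : 0 < b by rewrite /b subr_gt0.
have qR0 : 0 < (q%:R : R) by rewrite ltr0n.
have qR0' : 0 < (q'%:R : R) by rewrite ltr0n.
set lam := ((q'%:R : R) * a + b)^-1.
have lamd : 0 < (q'%:R : R) * a + b by rewrite addr_gt0 // mulr_gt0.
have lam0 : 0 < lam by rewrite invr_gt0.
have den : (q'%:R : R) + a^-1 - 1 = ((q'%:R : R) * a + b) / a.
  by rewrite /b; field.
have hp : p = q'%:R * lam * a.
  rewrite /p den /lam; field.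
  by rewrite a0 (lt0r_neq0 lamd).
have h1p : 1 - p = lam * b.
  rewrite hp /lam; field; exact: lt0r_neq0.
have [q0 _] : exists x : Q, x \in Q by apply/card_gt0P; rewrite hQ.
have [q0' _] : exists x : Q', x \in Q' by apply/card_gt0P; rewrite hQ'.
set K0 := kprim alpha vert edge set0; set c := kdual alpha edge face set0.
set M := (q'%:R : R) ^+ K0 / q'%:R ^+ c * lam ^+ #|E|.
have M0 : M != 0.
  by rewrite /M !mulf_neq0 ?invr_neq0 ?expf_neq0 ?lt0r_neq0.
pose fk w := fk_weight alpha vert edge ((#|Q| * #|Q'|)%:R : R) p w.
pose X w (t : {ffun V -> Q}) :=
  if const_on_prim alpha vert edge w t then (#|Q|%:R : R)^-1 ^+ kprim alpha vert edge w else 0.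
pose Y w (t : {ffun U -> Q'}) :=
  if const_on_dual alpha edge face w t then (#|Q'|%:R : R)^-1 ^+ kdual alpha edge face w else 0.
have term w t t' : fk w * X w t * Y w t' =
    M * ((if [disjoint w & eta_prim alpha vert edge t] then a ^+ #|w| else 0) *
         (if [disjoint ~: w & eta_dual alpha edge face t'] then b ^+ #|~: w| else 0)).
  rewrite /X /Y const_prim const_dual.
  case: ifP => _; last by rewrite !(mulr0, mul0r).
  case: ifP => _; last by rewrite !(mulr0, mul0r).
  have e1 : (kdual alpha edge face w + K0 = c + kprim alpha vert edge w + #|w|)%N := euler hmap w.
  have eq1 : (q'%:R : R) ^+ K0 = q'%:R ^+ c * q'%:R ^+ kprim alpha vert edge w *
      q'%:R ^+ #|w| / q'%:R ^+ kdual alpha edge face w.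
    by rewrite -!exprD -e1 addnC exprD mulfK // expf_neq0 // lt0r_neq0.
  rewrite /fk /fk_weight natrM hQ hQ' h1p hp /M -(cardsC w) exprD eq1 !exprMn !exprVn.
  have nz n (y : R) : 0 < y -> y ^+ n != 0 by move=> y0; rewrite expf_neq0 // lt0r_neq0.
  have h1 := nz (kprim alpha vert edge w) _ qR0.
  have h8 := nz (kdual alpha edge face w) _ qR0'.
  have h9 := nz c _ qR0'.
  have h4 := nz #|w| _ lamd.
  have h5 := nz #|~: w| _ lamd.
  move: h1 h8 h9 h4 h5.
  move: ((q%:R : R) ^+ kprim alpha vert edge w) => x1.
  move: ((q'%:R : R) ^+ kprim alpha vert edge w) => x2.
  move: ((q'%:R : R) ^+ kdual alpha edge face w) => x8.
  move: ((q'%:R : R) ^+ c) => x9.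
  move: ((q'%:R : R) ^+ #|w|) => x3.
  move: (((q'%:R : R) * a + b) ^+ #|w|) => x4.
  move: (((q'%:R : R) * a + b) ^+ #|~: w|) => x5.
  move: (a ^+ #|w|) (b ^+ #|~: w|) => x6 x7 h1 h8 h9 h4 h5.
  field.
  by rewrite h1 h8 h9 h4 h5.
have WS t t' : \sum_(w : {set E}) fk w * X w t * Y w t' = M * spin_weight alpha vert edge face a b t t'.
  under eq_bigr do rewrite term.
  rewrite -mulr_sumr; congr (M * _).
  set P := eta_prim alpha vert edge t; set Dd := eta_dual alpha edge face t'.
  pose g e (bit : bool) := if bit then (if e \in P then 0 else a) else (if e \in Dd then 0 else b).
  transitivity (\sum_(w : {set E}) \prod_e g e (e \in w)).
    apply: eq_bigr => w _; rewrite (bigID (fun e => e \in w)) /= -!prod_ind.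
    congr (_ * _).
      by apply: eq_big => // e ->.
    by apply: eq_big => e; rewrite inE // => /negbTE ->.
  rewrite sum_sets.
  rewrite (eq_bigr (fun e => (if e \in Dd then (if e \in P then 0 else a) else 1) *
      (if e \in P then b else 1))); last first.
    by move=> e _; rewrite /g; case: (e \in P); case: (e \in Dd); rewrite /b /=; ring.
  rewrite big_split /= -!big_mkcond prod_ind prodr_const.
  rewrite /spin_weight /in_Sigma -/P -/Dd disjoint_sym.
  by case: ifP => _; rewrite ?mul0r.
have sum1 w : \sum_(t : {ffun V -> Q}) X w t = 1.
  rewrite /X -big_mkcond /=.
  transitivity (\sum_(t in [set t : {ffun V -> Q} | const_on_prim alpha vert edge w t])
      (#|Q|%:R : R)^-1 ^+ kprim alpha vert edge w).
    by apply: eq_bigl => t; rewrite inE.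
  rewrite sumr_const /const_on_prim count_const //; last exact: sym_connect_sym (prim_sym hmap w).
  by rewrite -(mulr_natr ((_ : R)^-1 ^+ _)) natrX exprVn mulVf // expf_neq0 // pnatr_eq0 -lt0n hQ.
have sum1' w : \sum_(t : {ffun U -> Q'}) Y w t = 1.
  rewrite /Y -big_mkcond /=.
  transitivity (\sum_(t in [set t : {ffun U -> Q'} | const_on_dual alpha edge face w t])
      (#|Q'|%:R : R)^-1 ^+ kdual alpha edge face w).
    by apply: eq_bigl => t; rewrite inE.
  rewrite sumr_const /const_on_dual count_const //; last exact: sym_connect_sym (dual_sym hmap w).
  by rewrite -(mulr_natr ((_ : R)^-1 ^+ _)) natrX exprVn mulVf // expf_neq0 // pnatr_eq0 -lt0n hQ'.
have Cl : coupled_law alpha vert edge face p s s' =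
    (\sum_(w : {set E}) fk w * X w s * Y w s') / (\sum_(w : {set E}) fk w).
  rewrite /coupled_law /fk_prob mulr_suml; apply: eq_bigr => w _.
  change (fk w / (\sum_(w0 : {set E}) fk w0) * X w s * Y w s' = fk w * X w s * Y w s' / \sum_(w0 : {set E}) fk w0).
  move: (fk w) (X w s) (Y w s') (\sum_(w0 : {set E}) fk w0) => f1 x1 y1 z1; ring.
have Zeq : \sum_(w : {set E}) fk w =
    M * \sum_(t : {ffun V -> Q}) \sum_(t' : {ffun U -> Q'}) spin_weight alpha vert edge face a b t t'.
  rewrite (eq_bigr (fun w => fk w * (\sum_t X w t) * (\sum_t' Y w t'))); last first.
    by move=> w _; rewrite sum1 sum1' !mulr1.
  rewrite (eq_bigr (fun w => \sum_t \sum_t' fk w * X w t * Y w t')); last first.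
    move=> w _; rewrite [fk w * _]mulr_sumr mulr_suml; apply: eq_bigr => t _; by rewrite mulr_sumr.
  rewrite mulr_sumr exchange_big; apply: eq_bigr => t _.
  rewrite mulr_sumr exchange_big; apply: eq_bigr => t' _.
  exact: WS.
rewrite Cl Zeq WS /spin_law -mulf_div divff // mul1r.
by [].
Qed.
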